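(* Let $G=\langle a\rangle\times\langle b\rangle\cong\mathbb{Z}\times\mathbb{Z}$ and let $\mathcal{A}$ be a Schur ring over $G$ such that $\langle a^k\rangle$ is an $\mathcal{A}$-subgroup for some nonzero integer $k$. Let $D$ be the basic set of $\mathcal{A}$ containing $b$. Then one of the following holds: (i) $D=\{b\}$; (ii) $D=\{b,b^{-1}\}$; (iii) $D=\{ba^{i_0},b\}$ for some nonzero integer $i_0$; (iv) $D=\{b^{-1}a^{i_1},b\}$ for some nonzero integer $i_1$; (v) $D=\{b,\,ba^{i_2},\,b^{-1},\,b^{-1}a^{-i_2}\}$ for some nonzero integer $i_2$.
   Context: $\mathbb{F}$ is a field of characteristic $0$. A Schur ring over a group $G$ is a subspace $\mathcal{A}\subseteq\mathbb{F}[G]$ spanned by the elements $\underline{D}=\sum_{g\in D}g$, $D\in\mathcal{D}$, where $\mathcal{D}$ is a partition of $G$ into finite subsets such that $\{1\}\in\mathcal{D}$, $D\in\mathcal{D}\Rightarrow D^{-1}\in\mathcal{D}$, and each product $\underline{D_1}\,\underline{D_2}$ is a finite $\mathbb{F}$-linear combination of the $\underline{D}$, $D\in\mathcal{D}$. The elements of $\mathcal{D}$ are basic sets; an $\mathcal{A}$-subgroup is a subgroup which is a union of basic sets. *)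

(* Defs.v *)
From HB Require Import structures.
From mathcomp Require Import all_boot all_order all_algebra.
From Stdlib Require Import ClassicalEpsilon.
Set Implicit Arguments. Unset Strict Implicit. Unset Printing Implicit Defensive.
Import Order.TTheory GRing.Theory Num.Theory.
Local Open Scope ring_scope.

(* G = <a> x <b> ~ Z x Z, written additively: a = (1,0), b = (0,1). *)
Definition Zsq := (int * int)%type.
Definition gen_a : Zsq := (1, 0).
Definition gen_b : Zsq := (0, 1).

(* A partition D of G is represented by its equivalence relation R:
   the basic set containing g is { h | R g h }. *)
Definition enumerates (R : Zsq -> Zsq -> Prop) (g : Zsq) (s : seq Zsq) :=
  uniq s /\ forall h, h \in s <-> R g h.

(* coefficient of h in  underline(D1) * underline(D2)  in F[G] *)
Definition prod_coeff (s1 s2 : seq Zsq) (h : Zsq) : nat :=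
  \big[addn/0%N]_(x <- s1) count (fun y => x + y == h) s2.

Definition ind (F : fieldType) (P : Prop) : F :=
  if excluded_middle_informative P then 1 else 0.

Definition is_schur_ring (F : fieldType) (R : Zsq -> Zsq -> Prop) : Prop :=
  (forall g, R g g) /\
      (forall g h, R g h -> R h g) /\
      (forall g h k, R g h -> R h k -> R g k) /\
      (forall g, exists s, enumerates R g s) /\
      (* {1} is a basic set (identity = 0 additively) *)
      (forall h, R 0 h <-> h = 0) /\
      (* D in partition -> D^{-1} in partition *)
      (forall g h, R g h <-> R (- g) (- h)) /\
      (* product of basic-set sums is a finite F-linear combination of
         basic-set sums *)
      (forall g1 g2 s1 s2, enumerates R g1 s1 -> enumerates R g2 s2 ->
         exists (reps : seq (Zsq * F)),
           forall h, (prod_coeff s1 s2 h)%:R =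
             \sum_(p <- reps) p.2 * ind F (R p.1 h)).

(* H is an A-subgroup: union of basic sets (subgroup property is given). *)
Definition union_of_basic_sets (R : Zsq -> Zsq -> Prop) (H : Zsq -> Prop) :=
  forall g h, R g h -> H g -> H h.

Definition cyc_ak (k : int) : Zsq -> Prop :=
  fun g => g.2 = 0 /\ exists m : int, g.1 = k * m.

(* Main.v *)
Require Import Defs.
From mathcomp Require Import all_boot all_order all_algebra zify ring.
From Stdlib Require Import ClassicalEpsilon Classical.
Import GRing.Theory Num.Theory.
Local Open Scope ring_scope.
Set Implicit Arguments. Unset Strict Implicit.

Lemma pair_eq (p q : Zsq) : p.1 = q.1 -> p.2 = q.2 -> p = q.
Proof. by case: p q => a b [c d] /= -> ->. Qed.

Lemma sum_pos (T : Type) (s : seq T) (f : T -> nat) :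
  (0 < \big[addn/0%N]_(x <- s) f x)%N = has (fun x => 0 < f x)%N s.
Proof. by elim: s => [|x s IH]; rewrite ?big_nil ?big_cons //= addn_gt0 IH. Qed.

Lemma count_sum (T : Type) (a : pred T) (s : seq T) :
  count a s = \big[addn/0%N]_(y <- s) (a y : nat).
Proof. by elim: s => [|x s IH]; rewrite ?big_nil ?big_cons //= IH. Qed.

Section Main.
Variable F : fieldType.
Variable R : Zsq -> Zsq -> Prop.
Hypothesis hF : [pchar F] =i pred0.
Hypothesis hS : is_schur_ring F R.

Lemma Rrefl g : R g g. Proof. by case: hS. Qed.
Lemma Rsym g h : R g h -> R h g. Proof. by case: hS => _ [H _]; apply: H. Qed.
Lemma Rtrans g h l : R g h -> R h l -> R g l.
Proof. by case: hS => _ [_ [H _]]; apply: H. Qed.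
Lemma Renum g : exists s, enumerates R g s.
Proof. by case: hS => _ [_ [_ [H _]]]; apply: H. Qed.
Lemma R0 h : R 0 h <-> h = 0.
Proof. by case: hS => _ [_ [_ [_ [H _]]]]; apply: H. Qed.
Lemma Rneg g h : R g h <-> R (-g) (-h).
Proof. by case: hS => _ [_ [_ [_ [_ [H _]]]]]; apply: H. Qed.
Lemma Rprod g1 g2 s1 s2 : enumerates R g1 s1 -> enumerates R g2 s2 ->
  exists reps : seq (Zsq * F), forall h, (prod_coeff s1 s2 h)%:R =
             \sum_(p <- reps) p.2 * ind F (R p.1 h).
Proof. by case: hS => _ [_ [_ [_ [_ [_ H]]]]]; apply: H. Qed.

Lemma ind_iff P Q : (P <-> Q) -> ind F P = ind F Q.
Proof.
move=> PQ; rewrite /ind; case: excluded_middle_informative => p;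
  case: excluded_middle_informative => q //; exfalso; tauto.
Qed.

Lemma ind_bool (b : bool) : ind F b = b%:R.
Proof. by rewrite /ind; case: excluded_middle_informative; case: b. Qed.

Lemma natF_inj m n : (m%:R : F) = n%:R -> m = n.
Proof.
have h0 : forall n, (n%:R == 0 :> F) = (n == 0)%N by apply/GRing.pcharf0P.
move=> E; wlog le: m n E / (m <= n)%N.
  move=> W; case: (leqP m n) => [|/ltnW] h; [exact: W | symmetry; exact: W].
apply/eqP; rewrite eqn_leq le /=.
have: ((n - m)%:R == 0 :> F) by rewrite natrB // E subrr.
by rewrite h0 subn_eq0.
Qed.

Definition inA (f : Zsq -> F) := exists reps : seq (Zsq * F),
  forall h, f h = \sum_(p <- reps) p.2 * ind F (R p.1 h).

Lemma inA_inv f g h : inA f -> R g h -> f g = f h.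
Proof.
case=> reps E Rgh; rewrite !E; apply: eq_bigr => p _; congr (_ * _).
by apply: ind_iff; split => H; [exact: Rtrans H Rgh | exact: Rtrans H (Rsym Rgh)].
Qed.

Lemma prod_inv s1 s2 g1 g2 g h : enumerates R g1 s1 -> enumerates R g2 s2 ->
  R g h -> prod_coeff s1 s2 g = prod_coeff s1 s2 h.
Proof.
move=> e1 e2 Rgh; apply: natF_inj; have [reps E] := Rprod e1 e2.
by apply: (inA_inv (f := fun h => (prod_coeff s1 s2 h)%:R)) => //; exists reps.
Qed.

Lemma L3 u v w : R (u + v) w -> exists u' v', [/\ R u u', R v v' & w = u' + v'].
Proof.
move=> Huv; have [su eu] := Renum u; have [sv ev] := Renum v.
have E := prod_inv eu ev Huv.
have : (0 < prod_coeff su sv (u + v)%R)%N.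
  rewrite /prod_coeff sum_pos; apply/hasP; exists u; first by apply/eu.2; apply: Rrefl.
  rewrite -has_count; apply/hasP; exists v => //; by apply/ev.2; apply: Rrefl.
rewrite E /prod_coeff sum_pos => /hasP [u' /eu.2 Ru']; rewrite -has_count.
by case/hasP => v' /ev.2 Rv' /eqP <-; exists u', v'.
Qed.
Lemma inA_ext f g : (forall h, f h = g h) -> inA f -> inA g.
Proof. by move=> E [r Er]; exists r => h; rewrite -E. Qed.

Lemma inA0 : inA (fun _ => 0).
Proof. by exists [::] => h; rewrite big_nil. Qed.

Lemma inAD f1 f2 : inA f1 -> inA f2 -> inA (fun h => f1 h + f2 h).
Proof. by case=> r1 E1 [r2 E2]; exists (r1 ++ r2) => h; rewrite big_cat E1 E2. Qed.

Lemma inAZ c f : inA f -> inA (fun h => c * f h).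
Proof.
case=> r E; exists [seq (p.1, c * p.2) | p <- r] => h.
by rewrite big_map E mulr_sumr; apply: eq_bigr => p _ /=; rewrite mulrA.
Qed.

Lemma ind_conv q g2 s : enumerates R g2 s ->
  inA (fun h => \sum_(x <- s) ind F (R q (h - x))).
Proof.
move=> es; have [s1 e1] := Renum q; have [reps E] := Rprod e1 es.
exists reps => h; rewrite -E.
have -> : \sum_(x <- s) ind F (R q (h - x)) =
          \sum_(x <- s) (count (fun y => y + x == h) s1)%:R.
  apply: eq_bigr => x _; rewrite (ind_iff (Q := ((h - x) \in s1))); last first.
    by split => [H|/e1.2 //]; apply/e1.2.
  rewrite ind_bool; congr (_%:R).
  have Hc : (fun y => y + x == h) =1 pred1 (h - x).
    by move=> y /=; apply/eqP/eqP => [<-|->]; [rewrite addrK | rewrite subrK].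
  by rewrite (eq_count Hc) (count_uniq_mem _ e1.1).
rewrite -natr_sum; congr (_%:R); rewrite /prod_coeff.
under eq_bigr do rewrite count_sum.
rewrite exchange_big /=; apply: eq_bigr => y _; by rewrite count_sum.
Qed.

Lemma inA_conv f g2 s : inA f -> enumerates R g2 s ->
  inA (fun h => \sum_(x <- s) f (h - x)).
Proof.
case=> r E es.
apply: (inA_ext (f := fun h => \sum_(p <- r) p.2 * \sum_(x <- s) ind F (R p.1 (h - x)))).
  move=> h; under [RHS]eq_bigr do rewrite E.
  rewrite exchange_big /=; apply: eq_bigr => p _; by rewrite mulr_sumr.
elim: r {E} => [|p r IH].
  by apply: (inA_ext _ inA0) => h; rewrite big_nil.
apply: (inA_ext (f := fun h => p.2 * \sum_(x <- s) ind F (R p.1 (h - x)) +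
     \sum_(p <- r) p.2 * \sum_(x <- s) ind F (R p.1 (h - x)))).
  by move=> h; rewrite big_cons.
by apply: inAD => //; apply: inAZ; apply: ind_conv es.
Qed.

Fixpoint Ncnt (s : seq Zsq) (m : nat) (g : Zsq) : nat :=
  if m is m'.+1 then \big[addn/0%N]_(x <- s) Ncnt s m' (g - x) else (g == 0 :> Zsq).

Lemma Ncnt_inA g2 s m : enumerates R g2 s -> inA (fun h => (Ncnt s m h)%:R).
Proof.
move=> es; elim: m => [|m IH] /=.
  exists [:: (0, 1)] => h; rewrite big_seq1 mul1r /= -ind_bool; apply: ind_iff.
  by rewrite R0; split => [/eqP|->].
apply: (inA_ext _ (inA_conv IH es)) => h; by rewrite natr_sum.
Qed.

Lemma Ncnt_inv g2 s m g h : enumerates R g2 s -> R g h -> Ncnt s m g = Ncnt s m h.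
Proof. by move=> es Rgh; apply: natF_inj; apply: (inA_inv (Ncnt_inA m es)). Qed.

Lemma Ncnt_cons x s m g : Ncnt (x :: s) m g =
  \big[addn/0%N]_(j < m.+1) muln 'C(m, j) (Ncnt s (subn m j) (g - x *+ j)).
Proof.
elim: m g => [|m IH] g.
  by rewrite big_ord_recl big_ord0 /= subr0 mul1n addn0.
rewrite /= big_cons IH.
under eq_bigr do rewrite IH.
rewrite exchange_big /=.
set A := (X in addn X _).
have EB : \big[addn/0%N]_(j < m.+1) \big[addn/0%N]_(i <- s)
    muln 'C(m, j) (Ncnt s (subn m j) (g - i - x *+ j)) =
  addn (Ncnt s m.+1 g) (\big[addn/0%N]_(j < m) muln 'C(m, j.+1)
     (Ncnt s (subn m j) (g - x *+ j.+1))).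
  rewrite big_ord_recl /=; congr addn.
    by apply: eq_bigr => i _; rewrite bin0 mul1n subn0 mulr0n subr0.
  apply: eq_bigr => j _; rewrite -big_distrr /=; congr muln.
  have -> : subn m (bump 0 j) = (subn m j).-1 by rewrite /bump /= subnS.
  have hj : (0 < subn m j)%N by rewrite subn_gt0.
  case: (subn m j) hj => [//|n] _ /=.
  by apply: eq_bigr => i _; congr Ncnt; rewrite addrAC.
rewrite EB big_ord_recl /= bin0 mul1n mulr0n subr0.
have EC : \big[addn/0%N]_(j < m.+1) muln 'C(m.+1, bump 0 j)
     (Ncnt s (subn m.+1 (bump 0 j)) (g - x *+ bump 0 j)) =
   addn (\big[addn/0%N]_(j < m) muln 'C(m, j.+1)
     (Ncnt s (subn m j) (g - x *+ j.+1))) A.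
  have Hb : forall j : nat, bump 0 j = j.+1 by [].
  rewrite /A /bump /=; under eq_bigr do rewrite add1n binS subSS mulnDl.
  rewrite big_split /=; congr addn.
    by rewrite big_ord_recr /= bin_small // mul0n addn0.
  by apply: eq_bigr => j _; rewrite mulrS opprD addrA.
by rewrite EC addnCA (addnC A).
Qed.

Lemma Ncnt_modp p s g : prime p ->
  Ncnt s p g = count (fun x => g == x *+ p) s %[mod p].
Proof.
move=> pp; have p0 := prime_gt0 pp.
elim: s => [|x s IH].
  by case: p pp p0 => //= p' _ _; rewrite big_nil.
rewrite Ncnt_cons /=.
case: p pp p0 IH => // p' pp _ IH.
rewrite big_ord_recl big_ord_recr /=.
set M := \big[addn/0%N]_(i < p') _.
have dM : (p'.+1 %| M)%N.
  apply: dvdn_sum => j _; apply: dvdn_mulr; apply: prime_dvd_bin => //.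
  by rewrite /bump /= add1n ltnS ltn_ord.
rewrite -(divnK dM) bin0 mul1n mulr0n subr0 /bump /= add1n binn mul1n subnn /= subr_eq0.
rewrite -[\big[addn/0%N]_(x0 <- s) _]/(Ncnt s p'.+1 g).
rewrite addnCA modnMDl -modnDml IH modnDml addnC.
done.
Qed.

Lemma mulrn_pair (x : Zsq) n : x *+ n = (x.1 * n%:Z, x.2 * n%:Z).
Proof.
elim: n => [|n IH]; first by apply: pair_eq; rewrite /= mulr0.
by rewrite mulrS IH; apply: pair_eq; rewrite /= intS mulrDr mulr1.
Qed.

Lemma mulrn_inj (x y : Zsq) n : (0 < n)%N -> x *+ n = y *+ n -> x = y.
Proof.
move=> n0; rewrite !mulrn_pair => -[E1 E2].
have nz : (n%:Z != 0) by rewrite eqz_nat -lt0n.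
by apply: pair_eq; apply: (mulIf nz).
Qed.

Lemma frob p y g : prime p -> R (y *+ p) g -> exists y', R y y' /\ g = y' *+ p.
Proof.
move=> pp Rg; have [s es] := Renum y.
have E := Ncnt_inv p es Rg.
have M1 := Ncnt_modp s (y *+ p) pp; have M2 := Ncnt_modp s g pp.
have C1 : count (fun x => y *+ p == x *+ p) s = 1%N.
  have Hc : (fun x => y *+ p == x *+ p) =1 pred1 y.
    move=> x /=; apply/eqP/eqP => [/(mulrn_inj (prime_gt0 pp))|->] //.
  rewrite (eq_count Hc) (count_uniq_mem _ es.1).
  by have -> : y \in s by apply/es.2; apply: Rrefl.
have : (0 < count (fun x => g == x *+ p) s)%N.
  rewrite lt0n; apply/negP => /eqP c0; move: M2.
  by rewrite c0 -E M1 C1 mod0n modn_small ?prime_gt1.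
rewrite -has_count => /hasP [x xs /eqP ->]; exists x; split => //; exact/es.2.
Qed.

Variable k : int.
Hypothesis hk : k != 0.
Hypothesis hH : union_of_basic_sets R (cyc_ak k).

Lemma L5 i w : R (i, 0) w -> w.2 = 0.
Proof.
move=> Rw.
have [p lt pp] := prime_above (absz w.2 + absz k).
have g1 : gcdz k p%:Z = 1.
  rewrite /gcdz /=; apply/eqP; change (coprime `|k| p); rewrite coprime_sym prime_coprime //.
  apply/negP => /dvdn_leq; rewrite absz_gt0 hk => /(_ isT) H; lia.
have [u [v Huv]] := Bezoutz k p%:Z; rewrite g1 in Huv.
have Hi : ((i, 0) : Zsq) = (k * (u * i), 0) + (v * i, 0) *+ p.
  rewrite mulrn_pair; apply: pair_eq => /=; last by rewrite mul0r addr0.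
  by rewrite -[i in LHS]mulr1 -Huv; ring.
rewrite Hi in Rw; have [u' [v' [Ru Rv E]]] := L3 Rw.
have [Hu2 _] := hH Ru (conj erefl (ex_intro _ (u * i) erefl)).
have [y [_ Ey]] := frob pp Rv.
subst; move: lt; rewrite mulrn_pair /= Hu2 add0r abszM absz_nat => lt.
have : absz y.2 = 0%N by nia.
by move/eqP; rewrite absz_eq0 => /eqP ->; rewrite mul0r.
Qed.

Lemma int_split (z : int) : (1 < absz z)%N -> exists p q, prime p /\ z = q * p%:Z.
Proof.
move=> h; have pp := pdiv_prime h; have /dvdnP [q Hq] := pdiv_dvd (absz z).
exists (pdiv (absz z)); case: z h Hq pp => n h Hq pp.
  by exists q%:Z; split => //; rewrite -PoszM -Hq.
by exists (- q%:Z); split => //; rewrite NegzE mulNr -PoszM -Hq.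
Qed.

Lemma L_row0 t w : R (t, 0) w -> w = (t, 0) \/ w = (- t, 0).
Proof.
have [n] := ubnP (absz t); elim: n t w => // n IH t w ltn Rw.
have w2 := L5 Rw; have Ew : w = (w.1, 0) by apply: pair_eq.
case: (ltnP 1 (absz t)) => [gt1 | le1].
  have [p [q [pp Eq]]] := int_split gt1.
  have Et : ((t, 0) : Zsq) = (q, 0) *+ p.
    by rewrite mulrn_pair Eq; apply: pair_eq => //=; rewrite mul0r.
  rewrite Et in Rw; have [y [Ry Ey]] := frob pp Rw.
  have p1 := prime_gt1 pp.
  have lt : (absz q < n)%N.
    move: gt1 ltn; rewrite Eq abszM absz_nat => gt1 ltn; nia.
  by case: (IH q y lt Ry) => Ey'; [left|right]; rewrite Ey Ey' mulrn_pair;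
    apply: pair_eq => /=; rewrite ?mul0r // Eq ?mulNr.
have [t0|t1] : t = 0 \/ absz t = 1%N by lia.
  by subst; left; apply/R0.
case: (ltnP 1 (absz w.1)) => [gt1 | le1'].
  have [p [q [pp Eq]]] := int_split gt1.
  have Ew' : w = (q, 0) *+ p.
    by rewrite Ew mulrn_pair Eq; apply: pair_eq => //=; rewrite mul0r.
  have := Rsym Rw; rewrite Ew' => /(frob pp) [y [_ Ey]].
  have p1 := prime_gt1 pp.
  move: Ey; rewrite mulrn_pair => -[Ey1 _].
  move: t1; rewrite Ey1 abszM absz_nat => /eqP; rewrite muln_eq1 => /andP [_ /eqP p1e]; by rewrite p1e in p1.
have [w0|w1] : w.1 = 0 \/ absz w.1 = 1%N by lia.
  have : R 0 (t, 0) by apply: Rsym; rewrite Ew w0 in Rw.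
  by move/R0 => [] t0; move: t1; rewrite t0.
rewrite Ew; have [] : w.1 = t \/ w.1 = - t by lia.
  by move=> ->; left.
by move=> ->; right.
Qed.

Lemma L8 d : R gen_b d -> d.2 = 1 \/ d.2 = -1.
Proof.
move=> Rd; case: (ltnP 1 (absz d.2)) => [gt1|le1].
  have [p [q [pp Eq]]] := int_split gt1.
  have Ed : d = (d.1, 0) + (0, q) *+ p.
    by rewrite mulrn_pair; apply: pair_eq => /=; [rewrite mul0r addr0 | rewrite add0r Eq].
  have := Rsym Rd; rewrite Ed => /L3 [u' [v' [Ru Rv Eb]]].
  have u2 := L5 Ru; have [y [_ Ey]] := frob pp Rv.
  have p1 := prime_gt1 pp.
  move: Eb; rewrite Ey mulrn_pair /gen_b => -[_]; rewrite u2 add0r => E.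
  have := congr1 absz E; rewrite abszM absz_nat /= => /esym/eqP.
  by rewrite muln_eq1 => /andP [_ /eqP p1e]; rewrite p1e in p1.
have [d0|//] : d.2 = 0 \/ (d.2 = 1 \/ d.2 = -1) by lia.
have Ed : d = (d.1, 0) by apply: pair_eq.
by have := Rsym Rd; rewrite Ed => /L5.
Qed.

Lemma leq_sum_mem (s : seq Zsq) (f : Zsq -> nat) z : z \in s ->
  (f z <= \big[addn/0%N]_(y <- s) f y)%N.
Proof.
elim: s => //= y s IH; rewrite inE big_cons => /orP [/eqP ->|/IH h].
  exact: leq_addr.
exact: leq_trans h (leq_addl _ _).
Qed.

Lemma bound x0 : exists N : nat, forall z, R x0 z -> (absz z.1 <= N)%N.
Proof.
have [s es] := Renum x0; exists (\big[addn/0%N]_(z <- s) absz z.1) => z /es.2 zs.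
exact: leq_sum_mem.
Qed.

Lemma no_trans x0 u : u != 0 ->
  (forall s, R x0 (x0 + (s, 0)) -> R x0 (x0 + (u + s, 0))) -> False.
Proof.
move=> u0 H; have [N HN] := bound x0.
have Hn : forall n : nat, R x0 (x0 + (u * n%:Z, 0)).
  elim => [|n IH].
    have -> : x0 + (u * 0%:Z, 0) = x0 by apply: pair_eq => /=; lia.
    exact: Rrefl.
  have := H _ IH; congr R; apply: pair_eq => //=.
  by rewrite intS mulrDr mulr1.
have h2 := HN _ (Hn (2 * N).+1); have h1 := HN _ (Rrefl x0).
move: h2 => /=; move: h1; move: u0; rewrite -absz_eq0 => u0 h1 h2.
have : (absz (u * ((2 * N).+1)%:Z)%R <= 2 * N)%N by lia.
rewrite abszM absz_nat; nia.
Qed.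

Lemma trans_single c g h : (forall h, R c h -> h = c) -> R g h -> R (g + c) (h + c).
Proof.
move=> Hc Rgh; have : R ((g + c) + (- c)) h by rewrite addrK.
move/L3 => [u' [v' [Ru Rv E]]].
have : R c (- v') by have := (Rneg (-c) v').1 Rv; rewrite opprK.
move/Hc => Ev; have -> : h + c = u' by rewrite E -Ev addrK.
exact: Ru.
Qed.

Lemma GL x0 y : R x0 y ->
  (forall s, R x0 (x0 + (s, 0)) -> R x0 (y + (s, 0))) \/
  (forall s, R x0 (x0 + (s, 0)) -> R x0 (y - (s, 0))).
Proof.
move=> Ry; have [N HN] := bound x0.
set J : int := ((2 * N).+1)%:Z.
have E0 : x0 = (x0 + (J, 0)) + (- J, 0) by apply: pair_eq => /=; lia.
have := Ry; rewrite {1}E0 => /L3 [f [w [Rf Rw Ey]]].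
have Hs : forall s, R x0 (x0 + (s, 0)) -> exists z', R x0 z' /\
    (f.1 = z'.1 + (J - s) \/ f.1 = z'.1 - (J - s)) /\ f.2 = z'.2.
  move=> s Rs.
  have : R ((x0 + (s, 0)) + (J - s, 0)) f.
    by have -> : (x0 + (s, 0)) + (J - s, 0) = x0 + (J, 0) by apply: pair_eq => /=; lia.
  move/L3 => [z' [w' [Rz Rw' Ef]]]; exists z'; split; first exact: Rtrans Rs Rz.
  by case: (L_row0 Rw') => Ew'; rewrite Ef Ew' /=; split; try lia.
have hx0 := HN _ (Rrefl x0); have hy := HN _ Ry.
have Ey1 : y.1 = f.1 + w.1 by rewrite Ey.
have Ey2 : y.2 = f.2 + w.2 by rewrite Ey.
case: (L_row0 Rw) => Ew; rewrite Ew /= in Ey1 Ey2; [left|right] => s Rs;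
  have [z' [Rz [Ef1 Ef2]]] := Hs s Rs; have hz := HN _ Rz;
  have hs := HN _ Rs; move: hs => /= hs.
- case: Ef1 => Ef1; last by exfalso; lia.
  by have -> : y + (s, 0) = z' by apply: pair_eq => /=; lia.
- case: Ef1 => Ef1; first by exfalso; lia.
  by have -> : y - (s, 0) = z' by apply: pair_eq => /=; lia.
Qed.

Lemma two_point x0 u w : R x0 (x0 + (u, 0)) -> R x0 (x0 + (w, 0)) ->
  u != 0 -> w != 0 -> u = w.
Proof.
have refl : forall u, R x0 (x0 + (u, 0)) -> u != 0 ->
    forall s, R x0 (x0 + (s, 0)) -> R x0 (x0 + (u - s, 0)).
  move=> v Rv v0; case: (GL Rv) => H.
    exfalso; apply: (no_trans v0) => s Rs; have := H s Rs.
    by congr R; apply: pair_eq => /=; lia.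
  move=> s Rs; have := H s Rs; by congr R; apply: pair_eq => /=; lia.
move=> Ru Rw u0 w0; apply/eqP; rewrite -subr_eq0; apply/negPn/negP => uw.
apply: (no_trans uw) => s Rs.
have := refl u Ru u0 _ (refl w Rw w0 _ Rs).
by congr R; apply: pair_eq => /=; lia.
Qed.

Lemma sym_all : R (1, 0) (-1, 0) -> forall t, R (t, 0) (- t, 0).
Proof.
move=> Ra t.
have [//|nR] := classic (R (t, 0) (- t, 0)).
have Hc : forall h, R (t, 0) h -> h = (t, 0).
  move=> h Rh; case: (L_row0 Rh) => // Eh; by rewrite Eh in Rh.
have t0 : t = 0.
  by have := trans_single Hc Ra => /L_row0 [] E; move: (congr1 fst E) => /=; lia.
by subst; rewrite oppr0; apply: Rrefl.
Qed.

Lemma asym_I : ~ R (1, 0) (-1, 0) -> forall m, R gen_b (m, 1) -> m = 0.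
Proof.
move=> nRa.
have Ha : forall h, R (1, 0) h -> h = (1, 0).
  move=> h Rh; case: (L_row0 Rh) => // Eh; by rewrite Eh in Rh.
have Hna : forall h, R (-1, 0) h -> h = (-1, 0).
  move=> h Rh; have : R (1, 0) (- h) by have := (Rneg _ _).1 Rh.
  by move/Ha => E; rewrite -[h]opprK E.
have tn : forall n : nat, forall g h, R g h -> R (g + (n%:Z, 0)) (h + (n%:Z, 0)).
  elim => [|n IH] g h Rgh.
    have E : forall z : Zsq, z + (0%:Z, 0) = z by move=> z; apply: pair_eq => /=; lia.
    by rewrite !E.
  have := trans_single Ha (IH _ _ Rgh).
  have E : forall z : Zsq, z + (n%:Z, 0) + (1, 0) = z + (n.+1%:Z, 0).
    by move=> z; apply: pair_eq => /=; lia.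
  by rewrite !E.
have tm : forall n : nat, forall g h, R g h -> R (g - (n%:Z, 0)) (h - (n%:Z, 0)).
  elim => [|n IH] g h Rgh.
    have E : forall z : Zsq, z - (0%:Z, 0) = z by move=> z; apply: pair_eq => /=; lia.
    by rewrite !E.
  have := trans_single Hna (IH _ _ Rgh).
  have E : forall z : Zsq, z - (n%:Z, 0) + (-1, 0) = z - (n.+1%:Z, 0).
    by move=> z; apply: pair_eq => /=; lia.
  by rewrite !E.
have ti : forall m : int, forall g h, R g h -> R (g + (m, 0)) (h + (m, 0)).
  case=> n g h Rgh; first exact: tn.
  have := tm n.+1 _ _ Rgh.
  have E : forall z : Zsq, z - (n.+1%:Z, 0) = z + (Negz n, 0).
    by move=> z; apply: pair_eq => /=; rewrite ?NegzE; lia.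
  by rewrite !E.
move=> m Rm; apply/eqP; apply/negPn/negP => m0.
apply: (no_trans (x0 := gen_b) m0) => s Rs.
have := ti m _ _ Rs.
have -> : gen_b + (s, 0) + (m, 0) = gen_b + (m + s, 0) by apply: pair_eq => /=; lia.
apply: Rtrans.
by have -> : gen_b + (m, 0) = (m, 1) by apply: pair_eq => /=; lia.
Qed.

Lemma supp : R (1, 0) (-1, 0) -> forall i x, R gen_b (i, 1) -> R gen_b (x, -1) ->
  exists i' x', [/\ R gen_b (i', 1), R gen_b (x', -1) & - (i + x) = i' + x'].
Proof.
move=> Ra i x Ri Rx.
have := sym_all Ra (i + x).
have -> : ((i + x, 0) : Zsq) = (i, 1) + (x, -1) by apply: pair_eq => /=; lia.
move/L3 => [u' [v' [Ru Rv E]]].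
have Ru' := Rtrans Ri Ru; have Rv' := Rtrans Rx Rv.
have E1 := congr1 fst E; have E2 := congr1 snd E; rewrite /= in E1 E2.
case: (L8 Ru') => hu; case: (L8 Rv') => hv; try (exfalso; lia).
  exists u'.1, v'.1; split; last by lia.
    by have <- : u' = (u'.1, 1) by apply: pair_eq.
  by have <- : v' = (v'.1, -1) by apply: pair_eq.
exists v'.1, u'.1; split; last by lia.
  by have <- : v' = (v'.1, 1) by apply: pair_eq.
by have <- : u' = (u'.1, -1) by apply: pair_eq.
Qed.

Lemma ptE (h : Zsq) : h = (h.1, h.2).
Proof. by case: h. Qed.

Lemma main_thm :
  let D := R gen_b in
  (forall h, D h <-> h = (0, 1)) \/
  (forall h, D h <-> h = (0, 1) \/ h = (0, -1)) \/
  (exists i0 : int, i0 != 0 /\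
     forall h, D h <-> h = (i0, 1) \/ h = (0, 1)) \/
  (exists i1 : int, i1 != 0 /\
     forall h, D h <-> h = (i1, -1) \/ h = (0, 1)) \/
  (exists i2 : int, i2 != 0 /\
     forall h, D h <-> [\/ h = (0, 1), h = (i2, 1), h = (0, -1) | h = (- i2, -1)]).
Proof.
move=> D; rewrite /D.
have rowE : forall h, R gen_b h -> h = (h.1, 1) \/ h = (h.1, -1).
  by move=> h Rh; case: (L8 Rh) => E; [left|right]; rewrite [LHS]ptE E.
have Rb : R gen_b (0, 1) by apply: Rrefl.
have [[m [m0 Rm]] | noI] := classic (exists m, m != 0 /\ R gen_b (m, 1)).
  have Ra : R (1, 0) (-1, 0).
    by have [//|nRa] := classic (R (1, 0) (-1, 0)); move: m0; rewrite (asym_I nRa Rm).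
  have I2 : forall m', R gen_b (m', 1) -> m' = 0 \/ m' = m.
    move=> m' Rm'; have [->|m'0] := eqVneq m' 0; first by left.
    right; apply: (two_point (x0 := gen_b)) => //.
      by have -> : gen_b + (m', 0) = (m', 1) by apply: pair_eq => /=; lia.
    by have -> : gen_b + (m, 0) = (m, 1) by apply: pair_eq => /=; lia.
  have [[x Rx] | noJ] := classic (exists x, R gen_b (x, -1)); last first.
    right; right; left; exists m; split => // h; split.
      move=> Rh; case: (rowE _ Rh) => Eh.
        by rewrite Eh in Rh *; case: (I2 _ Rh) => ->; [right|left].
      by exfalso; apply: noJ; exists h.1; rewrite -Eh.
    by case=> ->.
  have [x1 [Rx1 Rx1m]] : exists x1, R gen_b (x1, -1) /\ R gen_b (x1 + m, -1).
    have Rbm : R gen_b (gen_b + (m, 0)).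
      by have -> : gen_b + (m, 0) = (m, 1) by apply: pair_eq => /=; lia.
    case: (GL Rx) => H; have := H _ Rbm.
      by move=> R2; exists x; split.
    move=> R2; exists (x - m); split; first exact: R2.
    by have -> : x - m + m = x by lia.
  have J2 : forall x', R gen_b (x', -1) -> x' = x1 \/ x' = x1 + m.
    move=> x' Rx'; have [E|u0] := eqVneq (x' - x1) 0; first by left; lia.
    right; suff : x' - x1 = m by lia.
    apply: (two_point (x0 := (x1, -1))) => //.
      apply: Rtrans (Rsym Rx1) _.
      by have -> : ((x1, -1) : Zsq) + (x' - x1, 0) = (x', -1) by apply: pair_eq => /=; lia.
    apply: Rtrans (Rsym Rx1) _.
    by have -> : ((x1, -1) : Zsq) + (m, 0) = (x1 + m, -1) by apply: pair_eq => /=; lia.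
  have S1 := supp Ra Rb Rx1; have S2 := supp Ra Rm Rx1; have S3 := supp Ra Rm Rx1m.
  have xm : x1 = - m.
    have m0' : m <> 0 by apply/eqP.
    move: S1 S2 S3 => [i1 [y1 [Ri1 Ry1 E1]]] [i2 [y2 [Ri2 Ry2 E2]]] [i3 [y3 [Ri3 Ry3 E3]]].
    case: (I2 _ Ri1) => ?; case: (J2 _ Ry1) => ?;
    case: (I2 _ Ri2) => ?; case: (J2 _ Ry2) => ?;
    case: (I2 _ Ri3) => ?; case: (J2 _ Ry3) => ?; subst; lia.
  right; right; right; right; exists m; split => // h; split.
    move=> Rh; case: (rowE _ Rh) => Eh; rewrite Eh in Rh *.
      by case: (I2 _ Rh) => ->; [constructor 1 | constructor 2].
    case: (J2 _ Rh) => ->; rewrite xm; first by constructor 4.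
    by rewrite addNr; constructor 3.
  case=> ->; [exact: Rb | exact: Rm | | by move: Rx1; rewrite xm].
  by move: Rx1m; rewrite xm addNr.
have noI' : forall m, R gen_b (m, 1) -> m = 0.
  move=> m Rm; apply/eqP/negPn/negP => m0; apply: noI; by exists m.
have [[x Rx] | noJ] := classic (exists x, R gen_b (x, -1)); last first.
  left => h; split; last by move=> ->.
  move=> Rh; case: (rowE _ Rh) => Eh.
    by rewrite Eh in Rh *; rewrite (noI' _ Rh).
  by exfalso; apply: noJ; exists h.1; rewrite -Eh.
have J1 : forall x', R gen_b (x', -1) -> x' = x.
  move=> x' Rx'; have R0b := Rsym Rx.
  have Rs : R (x, -1) ((x, -1) + (x' - x, 0)).
    apply: Rtrans R0b _.
    by have -> : ((x, -1) : Zsq) + (x' - x, 0) = (x', -1) by apply: pair_eq => /=; lia.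
  case: (GL R0b) => H; have := Rtrans Rx (H _ Rs).
    have -> : gen_b + (x' - x, 0) = (x' - x, 1) by apply: pair_eq => /=; lia.
    by move/noI' => ?; lia.
  have -> : gen_b - (x' - x, 0) = (x - x', 1) by apply: pair_eq => /=; lia.
  by move/noI' => ?; lia.
have chr : forall h, R gen_b h <-> h = (x, -1) \/ h = (0, 1).
  move=> h; split; last by case=> ->.
  move=> Rh; case: (rowE _ Rh) => Eh; rewrite Eh in Rh *.
    by rewrite (noI' _ Rh); right.
  by rewrite (J1 _ Rh); left.
have [x0|xn0] := eqVneq x 0.
  right; left => h; rewrite chr x0; tauto.
right; right; right; left; exists x; split => //.
Qed.

End Main.

(* G = Z x Z additively, a = (1,0), b = (0,1); b^e a^i = (i, e). *)
Theorem theorem3p3 (F : fieldType) (R : Zsq -> Zsq -> Prop) (k : int) :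
  [pchar F] =i pred0 ->
  is_schur_ring F R ->
  k != 0 ->
  union_of_basic_sets R (cyc_ak k) ->
  let D := R gen_b in
  (forall h, D h <-> h = (0, 1)) \/
  (forall h, D h <-> h = (0, 1) \/ h = (0, -1)) \/
  (exists i0 : int, i0 != 0 /\
     forall h, D h <-> h = (i0, 1) \/ h = (0, 1)) \/
  (exists i1 : int, i1 != 0 /\
     forall h, D h <-> h = (i1, -1) \/ h = (0, 1)) \/
  (exists i2 : int, i2 != 0 /\
     forall h, D h <-> [\/ h = (0, 1), h = (i2, 1), h = (0, -1) | h = (- i2, -1)]).
Proof.
move=> hF hS hk hH; exact: (main_thm hF hS hk hH).
Qed.
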